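(* Let $n_0, L\in\mathbb{N}_+$, $n_1,\dots,n_L\in\mathbb{N}_+$, and let $h_l\in\mathrm{RL}(n_{l-1},n_l)$ for $l=1,\dots,L$, with $\mathbf{h}=(h_1,\dots,h_L)$. Let $\gamma\in\Gamma$. Then $$|\mathcal{S}_{\mathbf{h}}|\le\big\|B^{(\gamma)}_{n_L}M_{n_{L-1},n_L}\cdots B^{(\gamma)}_{n_1}M_{n_0,n_1}e_{n_0+1}\big\|_1,$$ where $e_{n_0+1}\in\mathbb{R}^{n_0+1}$ is the standard unit vector with $1$ in position $n_0+1$ and $0$ elsewhere.
   Context: $\mathbb{N}=\{0,1,2,\dots\}$, $\mathbb{N}_+=\mathbb{N}\setminus\{0\}$, $\sigma(x)=\max(0,x)$. For $n,n'\in\mathbb{N}_+$, $\mathrm{RL}(n,n')$ is the set of maps $h:\mathbb{R}^n\to\mathbb{R}^{n'}$, $h(x)_i=\sigma(\langle x,w_i\rangle+b_i)$, for some $W\in\mathbb{R}^{n'\times n}$ with rows $w_i$ and $b\in\mathbb{R}^{n'}$. Signature: $S_h(x)_i=1$ iff $\langle x,w_i\rangle+b_i>0$, else $0$; $\mathcal{S}_h=\{S_h(x):x\in\mathbb{R}^n\}$. Convention: $\mathrm{RL}(0,n')$ consists of constant maps $\{0\}\to\mathbb{R}^{n'}$ and for such $h$, $\mathcal{H}_{n'}(\mathcal{S}_h)={\rm e}_0$. Multi signature: $S_{\mathbf{h}}(x)=(S_{h_1}(x),S_{h_2}(h_1(x)),\dots,S_{h_L}(h_{L-1}\circ\dots\circ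 h_1(x)))$, $\mathcal{S}_{\mathbf{h}}=\{S_{\mathbf{h}}(x):x\in\mathbb{R}^{n_0}\}$; $|s|=\sum_i s_i$. $V$: sequences $(v_j)_{j\in\mathbb{N}}$ in $\mathbb{N}$ with finite sum; ${\rm e}_i$ has $({\rm e}_i)_j=\delta_{ij}$. $v\preceq w$ iff $\sum_{j\ge J}v_j\le\sum_{j\ge J}w_j$ for all $J$. For a finite family, $\max_i(v^{(i)})_J=\max_i\sum_{j\ge J}v^{(i)}_j-\max_i\sum_{j\ge J+1}v^{(i)}_j$. $\mathcal{H}_{n'}(\mathcal{S})=(|\{s\in\mathcal{S}:|s|=j\}|)_j$ for $\mathcal{S}\subseteq\{0,1\}^{n'}$. $\Gamma$ is the set of families $(\gamma_{n,n'})_{n'\in\mathbb{N}_+,n\in\{0,\dots,n'\}}$ in $V$ with (i) $\max\{\mathcal{H}_{n'}(\mathcal{S}_h):h\in\mathrm{RL}(n,n')\}\preceq\gamma_{n,n'}$ and (ii) $n\le\tilde n\le n'\Rightarrow\gamma_{n,n'}\preceq\gamma_{\tilde n,n'}$. Clipping: $\mathrm{cl}_{i^*}(v)_i=v_i$ ($i<i^*$), $\sum_{j\ge i^*}v_j$ ($i=i^*$), $0$ ($i>i^*$). Bound matrix: for $\gamma\in\Gamma$, $n'\in\mathbb{N}_+$, $B^{(\gamma)}_{n'}\in\mathbb{N}^{(n'+1)\times(n'+1)}$ with $(B^{(\gamma)}_{n'})_{i,j}=(\mathrm{cl}_{j-1}(\gamma_{j-1,n'}))_{i-1}$ for $i,j\in\{1,\dots,n'+1\}$.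 Connector matrix: for $n,n'\in\mathbb{N}$, $M_{n,n'}\in\mathbb{R}^{(n'+1)\times(n+1)}$ with $(M_{n,n'})_{i,j}=\delta_{i,\min(j,n'+1)}$. *)

(* Defs.v *)
From HB Require Import structures.
From mathcomp Require Import all_boot all_order all_algebra.
From mathcomp Require Import boolp reals.
Set Implicit Arguments. Unset Strict Implicit. Unset Printing Implicit Defensive.
Import Order.TTheory GRing.Theory Num.Theory.

Record layer (R : realType) (n n' : nat) := Layer {
  lW : 'M[R]_(n', n);
  lb : 'cV[R]_n' }.

Definition preact (R : realType) n n' (h : layer R n n') (x : 'cV[R]_n)
  : 'cV[R]_n' := (lW h *m x + lb h)%R.

Definition relu (R : realType) (t : R) : R := Num.max 0%R t.

Definition lapply (R : realType) n n' (h : layer R n n') (x : 'cV[R]_n)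
  : 'cV[R]_n' := map_mx (@relu R) (preact h x).

Definition lsig (R : realType) n n' (h : layer R n n') (x : 'cV[R]_n)
  : {ffun 'I_n' -> bool} := [ffun i => (0 < preact h x i 0)%R].

Definition sigset (R : realType) n n' (h : layer R n n')
  : {set {ffun 'I_n' -> bool}} :=
  [set s | `[< exists x : 'cV[R]_n, lsig h x = s >]].

(* ---------- the space V (finitely supported nat sequences, as seq nat,
   entries beyond the size being 0) ---------- *)
Definition tailsum (v : seq nat) (J : nat) : nat := sumn (drop J v).

Definition vle (v w : seq nat) : Prop := forall J, tailsum v J <= tailsum w J.

Definition ve (i : nat) : seq nat := rcons (nseq i 0%N) 1%N.

(* max of a finite family (F a)_{a in A}, via the tail-sum formula *)
Definition vmax (I : finType) (A : {set I}) (F : I -> seq nat) : seq nat :=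
  mkseq (fun J => (\max_(a in A) tailsum (F a) J
                   - \max_(a in A) tailsum (F a) J.+1)%N)
        (\max_(a in A) size (F a)).

Definition bweight n (s : {ffun 'I_n -> bool}) : nat := #|[set i | s i]|.

Definition hist n' (S : {set {ffun 'I_n' -> bool}}) : seq nat :=
  mkseq (fun j => #|[set s in S | bweight s == j]|) n'.+1.

Definition RLsigsets (R : realType) n n' : {set {set {ffun 'I_n' -> bool}}} :=
  [set S | `[< exists h : layer R n n', sigset h = S >]].

(* max { H_{n'}(S_h) : h in RL(n,n') }, with the convention that for n = 0
   every H_{n'}(S_h) equals e_0 (so the max is e_0) *)
Definition maxhist (R : realType) n n' : seq nat :=
  if n == 0%N then ve 0 else vmax (RLsigsets R n n') (@hist n').

(* gamma in Gamma; gamma n n' only matters for n' >= 1, n <= n' *)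
Definition inGamma (R : realType) (gamma : nat -> nat -> seq nat) : Prop :=
  (forall n n', (0 < n')%N -> (n <= n')%N -> vle (maxhist R n n') (gamma n n'))
  /\ (forall n nt n', (0 < n')%N -> (n <= nt)%N -> (nt <= n')%N ->
        vle (gamma n n') (gamma nt n')).

Definition clip (istar : nat) (v : seq nat) (i : nat) : nat :=
  if (i < istar)%N then nth 0%N v i
  else if i == istar then tailsum v istar else 0%N.

(* bound matrix B^{(gamma)}_{n'}, 0-indexed: B i j = cl_j(gamma_{j,n'})_i *)
Definition boundmx (R : realType) (gamma : nat -> nat -> seq nat) (n' : nat)
  : 'M[R]_(n'.+1) :=
  \matrix_(i < n'.+1, j < n'.+1) (clip j (gamma j n') i)%:R%R.

(* connector matrix M_{n,n'}, 0-indexed: M i j = delta_{i, min(j, n')} *)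
Definition connmx (R : realType) (n n' : nat) : 'M[R]_(n'.+1, n.+1) :=
  \matrix_(i < n'.+1, j < n.+1) ((i : nat) == minn j n')%:R%R.

(* widths n : nat -> nat (n_0, n_1, ...), layers hs l in RL(n_l, n_{l+1})
   (i.e. h_{l+1} in the paper); only l < L is used. *)
Section Net.
Variables (R : realType) (n : nat -> nat)
          (hs : forall l : nat, layer R (n l) (n l.+1)).

Fixpoint fwd (k : nat) : 'cV[R]_(n 0) -> 'cV[R]_(n k) :=
  match k return 'cV[R]_(n 0) -> 'cV[R]_(n k) with
  | 0 => id
  | k'.+1 => fun x => lapply (hs k') (fwd k' x)
  end.

Definition msig (L : nat) (x : 'cV[R]_(n 0))
  : {dffun forall l : 'I_L, {ffun 'I_(n (nat_of_ord l).+1) -> bool}} :=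
  [ffun l : 'I_L => lsig (hs l) (fwd l x)].

Definition msigset (L : nat) :=
  [set s | `[< exists x : 'cV[R]_(n 0), msig L x = s >]].

End Net.

Fixpoint chainvec (R : realType) (gamma : nat -> nat -> seq nat)
  (n : nat -> nat) (k : nat) : 'cV[R]_((n k).+1) :=
  match k return 'cV[R]_((n k).+1) with
  | 0 => \col_(i < (n 0).+1) ((i : nat) == n 0)%:R%R
  | k'.+1 => boundmx R gamma (n k'.+1) *m connmx R (n k') (n k'.+1)
               *m chainvec R gamma n k'
  end.

Definition norm1 (R : realType) m (v : 'cV[R]_m) : R := (\sum_(i < m) `|v i 0|)%R.

(* Main.v *)
Require Import Defs.
From HB Require Import structures.
From mathcomp Require Import all_boot all_order all_algebra.
From mathcomp Require Import boolp reals.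
Import Order.TTheory GRing.Theory Num.Theory.
From mathcomp Require Import zify.
Lemma tailsum_rec v J : tailsum v J = nth 0 v J + tailsum v J.+1.
Proof.
rewrite /tailsum; case: (ltnP J (size v)) => h; first by rewrite (drop_nth 0 h).
by rewrite !drop_oversize ?nth_default //; apply: leq_trans h _.
Qed.

Lemma tailsum_split v J j : J <= j ->
  \sum_(J <= i < j) nth 0 v i + tailsum v j = tailsum v J.
Proof.
elim: j => [|j IH] hJ; first by rewrite big_geq //; move: hJ; rewrite leqn0 => /eqP ->.
case: (ltnP j J) => hj.
  have -> : J = j.+1 by apply/eqP; rewrite eqn_leq hJ hj.
  by rewrite big_geq.
rewrite big_nat_recr //= -addnA -tailsum_rec; exact: IH.
Qed.

Lemma clip_sum N j v J : j <= N ->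
  \sum_(i < N.+1 | J <= i) clip j v i = if J <= j then tailsum v J else 0.
Proof.
move=> hjN.
have -> : \sum_(i < N.+1 | J <= i) clip j v i = \sum_(J <= i < N.+1) clip j v i by rewrite big_geq_mkord.
have hz : forall a b, j < a -> \sum_(a <= i < b) clip j v i = 0.
  move=> a b ha; rewrite big_nat_cond big1 // => i /andP [/andP [hi _] _].
  by rewrite /clip ltnNge (ltnW (leq_trans ha hi)) /= gtn_eqF // (leq_trans ha hi).
case: (leqP J j) => hJ.
  rewrite (big_cat_nat _ (n:=j.+1)) //=; last by apply: leq_trans hJ _.
  rewrite (hz j.+1) // addn0 big_nat_recr //= /clip ltnn eqxx -(@tailsum_split v J j hJ).
  congr (_ + _); apply: eq_big_nat => i /andP [_ hi]; by rewrite hi.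
by rewrite hz.
Qed.

Lemma tailsum_mkseq f m J : tailsum (mkseq f m) J = \sum_(J <= j < m) f j.
Proof.
rewrite /tailsum /mkseq -map_drop drop_iota add0n sumnE big_map.
by rewrite /index_iota.
Qed.

Lemma card_sum_all (T : finType) (b : pred T) : #|[set x | b x]| = \sum_x (b x : nat).
Proof.
rewrite -sum1_card big_mkcond /=; apply: eq_bigr => x _; rewrite inE; by case: (b x).
Qed.

Lemma bweight_le n (s : {ffun 'I_n -> bool}) : bweight s <= n.
Proof. by rewrite /bweight -[n in _ <= n]card_ord max_card. Qed.

Lemma tailsum_hist n' (S : {set {ffun 'I_n' -> bool}}) J :
  tailsum (hist S) J = #|[set s in S | J <= bweight s]|.
Proof.
rewrite /hist tailsum_mkseq.
under eq_bigr => j _ do rewrite card_sum_all.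
rewrite card_sum_all exchange_big /=; apply: eq_bigr => s _.
case: (s \in S) => /=; last by rewrite big1.
rewrite -big_mkcond /= sum1_count.
have -> : count (fun j => bweight s == j) (index_iota J n'.+1) = count_mem (bweight s) (index_iota J n'.+1).
  by apply: eq_count => j /=; rewrite eq_sym.
rewrite count_uniq_mem ?iota_uniq // mem_iota.
have := bweight_le _ s; case: (J <= bweight s) => /=; lia.
Qed.

Lemma tailsum_vmax (I : finType) (A : {set I}) F a J : a \in A ->
  tailsum (F a) J <= tailsum (vmax A F) J.
Proof.
move=> aA.
pose M J := \max_(a in A) tailsum (F a) J.
pose S := \max_(a in A) size (F a).
have M0 : forall J, S <= J -> M J = 0.
  move=> K hK; rewrite /M big1 // => b bA; rewrite /tailsum drop_oversize //.
  by apply: leq_trans hK; apply: leq_bigmax_cond.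
have Mdec : forall J, M J.+1 <= M J.
  move=> K; apply/bigmax_leqP => b bA; apply: leq_trans (leq_bigmax_cond _ bA).
  by rewrite [X in _ <= X]tailsum_rec leq_addl.
have key : forall k K, S <= K + k -> tailsum (vmax A F) K = M K.
  elim=> [|k IH] K hK.
    rewrite addn0 in hK; by rewrite M0 // /tailsum /vmax drop_oversize // size_mkseq.
  case: (leqP S K) => hSK.
    by rewrite M0 // /tailsum /vmax drop_oversize // size_mkseq.
  rewrite tailsum_rec IH ?addSnnS // /vmax nth_mkseq //.
  by rewrite subnK // Mdec.
rewrite (key (S - J) J); last lia.
exact: leq_bigmax_cond.
Qed.
Local Open Scope ring_scope.

Lemma abel_id (R : realType) N (z : 'I_N.+1 -> R) (G : nat -> R) :
  let G' k := if k is k'.+1 then G k' else 0 in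
  \sum_(i < N.+1) z i * G i =
  \sum_(K < N.+1) (G' K.+1 - G' K) * \sum_(i < N.+1 | (K <= i)%N) z i.
Proof.
move=> G'.
have hG : forall i : 'I_N.+1, G i = \sum_(K < N.+1 | (K <= i)%N) (G' K.+1 - G' K).
  move=> i; rewrite -(big_mkord (fun K => K <= i)%N (fun K => G' K.+1 - G' K)).
  rewrite (big_cat_nat _ (n:=i.+1)) //=.
  have -> : \sum_(i.+1 <= K < N.+1 | (K <= i)%N) (G' K.+1 - G' K) = 0.
    rewrite big_nat_cond big1 // => K /andP [/andP [hK _] hK2].
    by move: hK2; rewrite leqNgt hK.
  have -> : \sum_(0 <= K < i.+1 | (K <= i)%N) (G' K.+1 - G' K) =
            \sum_(0 <= K < i.+1) (G' K.+1 - G' K).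
    by rewrite big_nat_cond [RHS]big_nat_cond; apply: eq_bigl => K; rewrite andbT ltnS andbb.
  by rewrite telescope_sumr // addr0 /G' subr0.
rewrite [LHS](eq_bigr (fun i : 'I_N.+1 => \sum_(K < N.+1) (if (K <= i)%N then z i * (G' K.+1 - G' K) else 0))); last first.
  by move=> i _; rewrite hG mulr_sumr big_mkcond.
rewrite exchange_big /=; apply: eq_bigr => K _.
rewrite mulr_sumr [RHS]big_mkcond /=.
apply: eq_bigr => i _; case: ifP => _; by rewrite ?mulr0 // mulrC.
Qed.

Lemma abel (R : realType) N (u w : 'I_N.+1 -> R) (G : nat -> R) :
  (forall K, \sum_(i < N.+1 | (K <= i)%N) u i <= \sum_(i < N.+1 | (K <= i)%N) w i) ->
  (forall k, G k <= G k.+1) -> 0 <= G 0 ->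
  \sum_(i < N.+1) u i * G i <= \sum_(i < N.+1) w i * G i.
Proof.
move=> huw hG hG0; rewrite !abel_id; apply: ler_sum => K _.
apply: ler_wpM2l; last exact: huw.
by case: (nat_of_ord K) => [|k] /=; rewrite subr_ge0 // hG.
Qed.

Lemma card_pair (K S : finType) (P : {set K * S}) (Q : pred (K * S)) :
  #|[set p in P | Q p]| = \sum_a #|[set t | ((a, t) \in P) && Q (a, t)]|.
Proof.
rewrite card_sum_all.
under [RHS]eq_bigr => a _ do rewrite (@card_sum_all S (fun t => ((a, t) \in P) && Q (a, t))).
rewrite pair_bigA /=; apply: eq_bigr; by case.
Qed.

Definition im (X : Type) (A : finType) (f : X -> A) : {set A} :=
  [set a | `[< exists x, f x = a >]].
Arguments im {X A} f.

Lemma imP (X : Type) (A : finType) (f : X -> A) a :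
  reflect (exists x, f x = a) (a \in im f).
Proof. rewrite inE; exact: asboolP. Qed.
Arguments imP {X A f a}.

Lemma card_im_eq (X : Type) (x0 : X) (A B : finType) (f : X -> A) (g : X -> B) :
  (forall x y, f x = f y <-> g x = g y) -> #|im f| = #|im g|.
Proof.
move=> hfg.
pose phi a := match pselect (exists x, f x = a) with
  | left p => g (projT1 (cid p)) | right _ => g x0 end.
have phiP : forall x, phi (f x) = g x.
  move=> x; rewrite /phi; case: pselect => [p|np]; last by exfalso; apply: np; exists x.
  by case: (cid p) => y /= /hfg.
have -> : im g = [set phi a | a in im f].
  apply/setP => b; apply/imP/imsetP.
    by case=> x <-; exists (f x); [apply/imP; exists x | rewrite phiP].
  by case=> a /imP [x <-] ->; exists x; rewrite phiP.
rewrite card_in_imset // => a a' /imP [x <-] /imP [y <-]; rewrite !phiP.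
by move/hfg.
Qed.
Local Open Scope ring_scope.

Definition Dm (R : realType) m (t : {ffun 'I_m -> bool}) : 'M[R]_m :=
  diag_mx (\row_i ((t i)%:R)).
Arguments Dm R {m}.

Lemma lapply_diag (R : realType) m m' (h : layer R m m') z :
  lapply h z = Dm R (lsig h z) *m preact h z.
Proof.
apply/matrixP => i k; rewrite (ord1 k) /Dm mul_diag_mx !mxE /relu ffunE.
rewrite maxElt /preact !mxE; by case: ifP => _; rewrite ?mul1r ?mul0r.
Qed.

Lemma Pmx_ex (R : realType) m (t : {ffun 'I_m -> bool}) :
  exists P : 'M[R]_(m, bweight t), forall u : 'cV[R]_m, exists y, Dm R t *m u = P *m y.
Proof.
pose A := [set i | t i].
exists (\matrix_(i < m, k < #|A|) ((i == enum_val k)%:R)) => u.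
exists (\col_(k < #|A|) u (enum_val k) 0).
apply/matrixP => i j; rewrite /Dm mul_diag_mx !mxE (ord1 j).
case: (boolP (t i)) => ti.
  have Ai : i \in A by rewrite inE.
  rewrite (bigD1 (enum_rank_in Ai i)) //= !mxE enum_rankK_in // eqxx mul1r.
  rewrite big1 ?addr0 // => k hk; rewrite !mxE.
  case: eqP => [e|_]; last by rewrite mul0r.
  exfalso; move/negP: hk; apply; apply/eqP.
  apply: (@enum_val_inj _ A); rewrite enum_rankK_in //; exact/esym.
rewrite mul0r big1 // => k _; rewrite !mxE.
case: eqP => [e|_]; last by rewrite mul0r.
by have := enum_valP k; rewrite -e inE (negbTE ti).
Qed.

Lemma geo_step (R : realType) m m' d (h : layer R m m') (A : 'M[R]_(m, d)) (c : 'cV[R]_m)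
  (t : {ffun 'I_m' -> bool}) :
  exists (A' : 'M[R]_(m', minn d (bweight t))) (c' : 'cV[R]_m'),
    forall y, lsig h (A *m y + c) = t -> exists y', lapply h (A *m y + c) = A' *m y' + c'.
Proof.
case: (leqP d (bweight t)) => hd.
  exists (Dm R t *m (lW h *m A)), (Dm R t *m (lW h *m c + lb h)) => y hy; exists y.
  by rewrite lapply_diag hy /preact !mulmxDr addrA !mulmxA.
have [P hP] := @Pmx_ex R _ t.
exists P, 0 => y hy.
rewrite lapply_diag hy; have [y' ->] := hP (preact h (A *m y + c)).
by exists y'; rewrite addr0.
Qed.

Lemma sig_sub (R : realType) m m' d (h : layer R m m') (A : 'M[R]_(m, d)) (c : 'cV[R]_m) :
  exists g : layer R (minn d m') m', forall y, lsig h (A *m y + c) \in sigset g.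
Proof.
case: (leqP d m') => hd.
  exists (Layer (lW h *m A) (lW h *m c + lb h)) => y; rewrite inE; apply/asboolP.
  exists y; rewrite /lsig /preact /=; apply/ffunP => i; rewrite !ffunE.
  by rewrite mulmxDr addrA mulmxA.
exists (Layer 1%:M 0) => y; rewrite inE; apply/asboolP.
exists (\col_i ((lsig h (A *m y + c) i)%:R)).
rewrite /lsig /preact /=; apply/ffunP => i; rewrite !ffunE mul1mx addr0 mxE ffunE.
by rewrite ltr0n lt0b.
Qed.

Fixpoint keyT (n : nat -> nat) (l : nat) : finType :=
  match l with 0 => unit | l'.+1 => (keyT n l' * {ffun 'I_(n l'.+1) -> bool})%type end.

Fixpoint key (R : realType) n (hs : forall l : nat, layer R (n l) (n l.+1)) l
  (x : 'cV[R]_(n 0)) : keyT n l :=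
  match l return keyT n l with
  | 0 => tt
  | l'.+1 => (key R n hs l' x, lsig (hs l') (fwd hs l' x)) end.

Lemma key_eq (R : realType) (n : nat -> nat) (hs : forall l : nat, layer R (n l) (n l.+1)) L (x y : 'cV[R]_(n 0)) :
  key R n hs L x = key R n hs L y <->
  (forall l, (l < L)%N -> lsig (hs l) (fwd hs l x) = lsig (hs l) (fwd hs l y)).
Proof.
elim: L => [|L IH] /=; first by split.
split.
  case=> /IH h1 h2 l; rewrite ltnS leq_eqVlt => /orP [/eqP -> //|]; exact: h1.
move=> h; congr pair; last exact: h.
by apply/IH => l hl; apply: h; apply: ltnW.
Qed.

Lemma msig_eq (R : realType) (n : nat -> nat) (hs : forall l : nat, layer R (n l) (n l.+1)) L (x y : 'cV[R]_(n 0)) :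
  msig hs L x = msig hs L y <->
  (forall l, (l < L)%N -> lsig (hs l) (fwd hs l x) = lsig (hs l) (fwd hs l y)).
Proof.
split.
  move=> e l hl; move/ffunP: e => /(_ (Ordinal hl)); by rewrite !ffunE.
move=> h; apply/ffunP => l; rewrite !ffunE; exact: h.
Qed.

Lemma card_msig (R : realType) (n : nat -> nat) (hs : forall l : nat, layer R (n l) (n l.+1)) L :
  #|msigset hs L| = #|im (key R n hs L)|.
Proof.
apply: (@card_im_eq _ 0) => x y; rewrite key_eq; exact: msig_eq.
Qed.

Lemma card_sumR (R : realType) (T : finType) (S : {set T}) (P : pred T) :
  (#|[set a in S | P a]|%:R : R) = \sum_(a in S) (P a)%:R.
Proof.
rewrite card_sum_all natr_sum [RHS]big_mkcond; apply: eq_bigr => a _.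
by case: (a \in S).
Qed.

Lemma sum_by_dim (R : realType) (T : finType) (S : {set T}) (dim : T -> nat) N (F : nat -> R) :
  (forall a, a \in S -> (dim a <= N)%N) ->
  \sum_(a in S) F (dim a) = \sum_(i < N.+1) #|[set a in S | dim a == i]|%:R * F i.
Proof.
move=> hS.
under [RHS]eq_bigr => i _ do rewrite card_sumR mulr_suml.
rewrite exchange_big /=; apply: eq_bigr => a aS.
have hd : (dim a < N.+1)%N by rewrite ltnS hS.
rewrite (bigD1 (Ordinal hd)) //= eqxx mul1r big1 ?addr0 // => i hi.
case: eqP => [e|_]; last by rewrite mul0r.
by exfalso; move/negP: hi; apply; apply/eqP; apply: val_inj; rewrite /= e.
Qed.

Lemma chainvec_S (R : realType) gamma (n : nat -> nat) l (r : 'I_(n l.+1).+1) :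
  chainvec R gamma n l.+1 r 0 =
  \sum_(k < (n l).+1) (clip (minn k (n l.+1)) (gamma (minn k (n l.+1)) (n l.+1)) r)%:R
                      * chainvec R gamma n l k 0.
Proof.
rewrite /= mxE; apply: eq_bigr => k _; congr (_ * _).
rewrite mxE.
have hk : (minn k (n l.+1) < (n l.+1).+1)%N by rewrite ltnS geq_minr.
rewrite (bigD1 (Ordinal hk)) //= !mxE eqxx mulr1 big1 ?addr0 // => j hj.
rewrite !mxE; case: eqP => [e|_]; last by rewrite mulr0.
by exfalso; move/negP: hj; apply; apply/eqP; apply: val_inj; rewrite /= e.
Qed.

Lemma chainvec_ge0 (R : realType) gamma (n : nat -> nat) l i :
  0 <= chainvec R gamma n l i 0.
Proof.
elim: l i => [|l IH] i; first by rewrite mxE ler0n.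
rewrite chainvec_S; apply: sumr_ge0 => k _; apply: mulr_ge0 => //; exact: ler0n.
Qed.

Lemma mul_thin (R : realType) m d (A : 'M[R]_(m, d)) (y : 'cV[R]_d) : d = 0%N -> A *m y = 0.
Proof. move=> hd; subst d; by rewrite thinmx0 mul0mx. Qed.

Definition Inv (R : realType) (n : nat -> nat) (hs : forall l : nat, layer R (n l) (n l.+1))
  (gamma : nat -> nat -> seq nat) (l : nat) : Prop :=
  exists dim : keyT n l -> nat,
    (forall a, a \in im (key R n hs l) -> (dim a <= n l)%N /\
       exists (A : 'M[R]_(n l, dim a)) (c : 'cV[R]_(n l)),
         forall x, key R n hs l x = a -> exists y, fwd hs l x = A *m y + c)
    /\ forall K, (#|[set a in im (key R n hs l) | (K <= dim a)%N]|%:R : R) <=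
                 \sum_(i < (n l).+1 | (K <= i)%N) chainvec R gamma n l i 0.

Lemma Inv0 (R : realType) (n : nat -> nat) (hs : forall l : nat, layer R (n l) (n l.+1)) (gamma : nat -> nat -> seq nat) :
  Inv R n hs gamma 0.
Proof.
exists (fun _ => n 0); split.
  move=> a _; split => //; exists 1%:M, 0 => x _; exists x; by rewrite mul1mx addr0.
move=> K; case: (leqP K (n 0)) => hK.
  rewrite (bigD1 ord_max) //= mxE eqxx.
  apply: (@le_trans _ _ 1); last by rewrite lerDl sumr_ge0 // => i _; rewrite mxE ler0n.
  rewrite lern1; apply: leq_trans (max_card _) _; by rewrite card_unit.
apply: (@le_trans _ _ 0); last by apply: sumr_ge0 => i _; rewrite mxE ler0n.
rewrite lern0 cards_eq0; apply/eqP/setP => a; rewrite !inE.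
by rewrite andbF.
Qed.

Lemma Inv_step (R : realType) (n : nat -> nat) (hs : forall l : nat, layer R (n l) (n l.+1))
  (gamma : nat -> nat -> seq nat) l :
  inGamma R gamma -> (0 < n l.+1)%N -> Inv R n hs gamma l -> Inv R n hs gamma l.+1.
Proof.
move=> [G1 G2] hn' [dim [hA hK]].
have memS : forall a t, ((a, t) : keyT n l.+1) \in im (key R n hs l.+1) <->
    exists x, key R n hs l x = a /\ lsig (hs l) (fwd hs l x) = t.
  move=> a t; split.
    by move/imP => [x /= [e1 e2]]; exists x.
  by move=> [x [e1 e2]]; apply/imP; exists x => /=; rewrite e1 e2.
pose dim' := fun p : (keyT n l * {ffun 'I_(n l.+1) -> bool})%type =>
  minn (dim p.1) (bweight p.2).
exists dim'; split.
  move=> [a t] /memS [x0 [e1 e2]].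
  have Ha : a \in im (key R n hs l) by apply/imP; exists x0.
  have [hda [A [c hAc]]] := hA a Ha.
  split; first by rewrite /dim' /=; apply: leq_trans (geq_minr _ _) (bweight_le _ _).
  have [A' [c' hA']] := @geo_step R _ _ _ (hs l) A c t.
  exists A', c' => x /= [hx1 hx2].
  have [y hy] := hAc x hx1.
  rewrite hy in hx2; have [y' hy'] := hA' y hx2.
  by exists y'; rewrite hy.
move=> K.
pose n' := n l.+1.
pose Gf k := \sum_(r < n'.+1 | (K <= r)%N) (clip (minn k n') (gamma (minn k n') n') r)%:R : R.
have GfE : forall k, Gf k = (if (K <= minn k n')%N then tailsum (gamma (minn k n') n') K else 0)%:R.
  by move=> k; rewrite /Gf -natr_sum clip_sum // geq_minr.
rewrite (@card_pair (keyT n l) {ffun 'I_(n l.+1) -> bool} (im (key R n hs l.+1)) (fun p => K <= dim' p)%N).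
rewrite natr_sum (bigID (fun a => a \in im (key R n hs l))) /=.
rewrite [X in _ + X]big1 ?addr0; last first.
  move=> a Ha; apply/eqP; rewrite pnatr_eq0 cards_eq0; apply/eqP/setP => t.
  rewrite in_set in_set0; apply/negbTE/negP => /andP [/memS [x [e1 _]] _].
  by move/negP: Ha; apply; apply/imP; exists x.
have hdim : forall a, a \in im (key R n hs l) -> (dim a <= n l)%N by move=> a /hA [].
apply: (@le_trans _ _ (\sum_(a in im (key R n hs l)) Gf (dim a))).
  apply: ler_sum => a Ha.
  have [hda [A [c hAc]]] := hA a Ha.
  have hS : forall t, t \in [set t | ((a, t) \in im (key R n hs l.+1)) && (K <= dim' (a, t))%N] ->
      (exists y, t = lsig (hs l) (A *m y + c)) /\ (K <= minn (dim a) (bweight t))%N.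
    move=> t; rewrite in_set => /andP [/memS [x [e1 e2]] h2]; split => //.
    have [y hy] := hAc x e1; exists y; by rewrite -e2 hy.
  rewrite GfE ler_nat.
  case: (leqP K (minn (dim a) n')) => hKj; last first.
    rewrite leqn0 cards_eq0; apply/eqP/setP => t; rewrite in_set0.
    apply/negP => /hS [_ h]; have := bweight_le _ t; rewrite /n' in hKj; lia.
  case: (posnP (dim a)) => hd0.
    have K0 : K = 0%N by move: hKj; rewrite hd0 min0n; lia.
    subst K; rewrite hd0 min0n.
    apply: (@leq_trans #|[set lsig (hs l) c]|).
      apply: subset_leq_card; apply/subsetP => t /hS [[y ->] _].
      by rewrite (@mul_thin R _ _ A y hd0) add0r in_set1.
    rewrite cards1; have := G1 0%N n' hn' (leq0n _) 0%N.
    by rewrite /maxhist eqxx /ve /tailsum /= !drop0.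
  have [g hg] := @sig_sub R _ _ _ (hs l) A c.
  apply: (@leq_trans #|[set t in sigset g | (K <= bweight t)%N]|).
    apply: subset_leq_card; apply/subsetP => t /hS [[y ->] h].
    rewrite inE hg /=; exact: leq_trans h (geq_minr _ _).
  rewrite -tailsum_hist.
  have Hmem : sigset g \in RLsigsets R (minn (dim a) n') n'.
    by rewrite inE; apply/asboolP; exists g.
  apply: leq_trans (@tailsum_vmax _ (RLsigsets R (minn (dim a) n') n') (@hist n') (sigset g) K Hmem) _.
  have hne : (minn (dim a) n' == 0%N) = false by apply/negbTE; rewrite /n'; lia.
  have := G1 (minn (dim a) n') n' hn' (geq_minr _ _) K.
  by rewrite /maxhist hne.
rewrite (@sum_by_dim R _ (im (key R n hs l)) dim (n l) Gf hdim).
have huw : forall K', \sum_(i < (n l).+1 | (K' <= i)%N) #|[set a in im (key R n hs l) | dim a == i]|%:R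
    <= \sum_(i < (n l).+1 | (K' <= i)%N) chainvec R gamma n l i 0.
  move=> K'; apply: le_trans (hK K').
  rewrite card_sumR (@sum_by_dim R _ (im (key R n hs l)) dim (n l) (fun k => (K' <= k)%N%:R) hdim).
  rewrite big_mkcond le_eqVlt; apply/orP; left; apply/eqP; apply: eq_bigr => i _.
  by case: ifP => _; rewrite ?mulr1 ?mulr0.
have Gmono : forall k, Gf k <= Gf k.+1.
  move=> k; rewrite !GfE; case: ifP => h1; last by rewrite ler0n.
  have h2 : (K <= minn k.+1 n')%N by apply: leq_trans h1 _; rewrite /n'; lia.
  rewrite h2 ler_nat; apply: (G2 _ _ _ hn'); rewrite /n'; lia.
have Gf0 : 0 <= Gf 0%N by rewrite GfE ler0n.
apply: le_trans (@abel R (n l) _ (fun i => chainvec R gamma n l i 0) Gf huw Gmono Gf0) _.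
rewrite le_eqVlt; apply/orP; left; apply/eqP.
have -> : \sum_(i < (n l.+1).+1 | (K <= i)%N) chainvec R gamma n l.+1 i 0 =
   \sum_(i < (n l.+1).+1 | (K <= i)%N) \sum_(k < (n l).+1) (clip (minn k (n l.+1)) (gamma (minn k (n l.+1)) (n l.+1)) i)%:R
                      * chainvec R gamma n l k 0.
  by apply: eq_bigr => i _; rewrite chainvec_S.
rewrite exchange_big /=; apply: eq_bigr => k _; rewrite /Gf mulr_sumr; apply: eq_bigr => r _.
by rewrite mulrC.
Qed.

Theorem mainTheorem2 (R : realType) (L : nat) (n : nat -> nat)
  (hs : forall l : nat, layer R (n l) (n l.+1))
  (gamma : nat -> nat -> seq nat) :
  (0 < L)%N -> (forall l, (l <= L)%N -> (0 < n l)%N) ->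
  inGamma R gamma ->
  (#|msigset hs L|%:R : R) <= norm1 (chainvec R gamma n L).
Proof.
move=> hL hpos hG.
have inv : forall l, (l <= L)%N -> Inv R n hs gamma l.
  elim=> [|l IH] hl; first exact: Inv0.
  apply: Inv_step => //; [exact: hpos | apply: IH; exact: ltnW].
have [dim [_ hK]] := inv L (leqnn L).
rewrite card_msig.
have e : [set a in im (key R n hs L) | (0 <= dim a)%N] = im (key R n hs L).
  by apply/setP => a; rewrite !inE andbT.
have := hK 0%N; rewrite e => /le_trans; apply.
rewrite /norm1 le_eqVlt; apply/orP; left; apply/eqP.
apply: eq_big => [i //|i _]; by rewrite ger0_norm // chainvec_ge0.
Qed.
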